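(* Let $K$ be a field of characteristic $p$, $q$ a power of $p$, $\mathbb{F}_q\subset K$. Extend the Carlitz module to the map $\phi:\mathbb{F}_q[[T]]\to K\{\!\{\tau\}\!\}$, $\phi(\sum_{i\ge0}a_iT^i)=\sum_{i\ge0}a_i\tau^i$ (corresponding to the $A$-field structure $\iota_0$ with $\iota_0(T)=0$). Give $\mathbb{F}_q[[T]]$ the language $\mathcal{L}_T=\{0,1,T,+,\cdot\}$ and $K\{\!\{\tau\}\!\}$ the language $\mathcal{L}_{\tau,\iota_0}=\{0,1,\iota_0(T),\tau,+,\cdot\}$. Then $\phi$ is an effective Diophantine map. If Hilbert's tenth problem over $(\mathbb{F}_q[[T]],\mathcal{L}_T)$ has a negative answer, then Hilbert's tenth problem over $(K\{\!\{\tau\}\!\},\mathcal{L}_{\tau,\iota_0})$ has a negative answer.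
   Context: $K\{\!\{\tau\}\!\}$ is the twisted power series ring: series $\sum_{i\ge0}a_i\tau^i$, $a_i\in K$, with usual addition and multiplication determined by $\tau a=a^q\tau$, i.e. $(\sum a_i\tau^i)(\sum b_j\tau^j)=\sum_k(\sum_{i+j=k}a_ib_j^{q^i})\tau^k$. For a set $R$ with a language $\mathcal{L}$ (constants, functions, relations incl. $0$ and $=$), $S\subset R^k$ is Diophantine if $S=\{\vec x\mid\exists\vec y\ (f_1\wedge\dots\wedge f_r)\}$ with basic formulas $f_i$ of the form $(t_1,\dots,t_m)\in S'$, $S'$ a relation or equality and $t_j$ terms of $\mathcal{L}$. A map $d:R_1\to R_2$ is Diophantine if images (coordinatewise) of Diophantine sets are Diophantine; effective if a Diophantine definition of $d(S)$ can be algorithmically computed from one of $S$. With $S_c'(\mathcal{L})=\{x\mid\{x\}\text{ Diophantine}\}$, Hilbert's tenth problem exists over $(R,\mathcal{L})$ if there is a recursive ring $R_0$ with (constants of $\mathcal{L}$) $\subset R_0\subset S_c'(\mathcal{L})$; it has a negative answer if no algorithm decides, for finite conjunctions of basic formulas with extra coefficients in $R_0$, whether they have a solution in $R$. *)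

(* Defs.v *)
From mathcomp Require Import all_boot all_order all_algebra all_field.
Set Implicit Arguments. Unset Strict Implicit. Unset Printing Implicit Defensive.
Import GRing.Theory.
Local Open Scope ring_scope.

Definition npair (a b : nat) : nat := ((2 ^ a) * (b.*2).+1).-1.
Definition unpair1 (x : nat) : nat := logn 2 x.+1.
Definition unpair2 (x : nat) : nat := ((x.+1 %/ 2 ^ (logn 2 x.+1)).-1)./2.

(* Codes of partial recursive functions (pairing-based basis). *)
Inductive rec : Type :=
| RZero | RSucc | RFst | RSnd
| RPair (f g : rec)
| RComp (f g : rec)
| RPrec (f g : rec)          (* <0,x> |-> f x ; <n+1,x> |-> g <n, <h<n,x>, x>> *)
| RMu (f : rec).             (* x |-> least n with f <n,x> = 0 *)

Inductive eval : rec -> nat -> nat -> Prop :=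
| eZero x : eval RZero x 0
| eSucc x : eval RSucc x x.+1
| eFst x : eval RFst x (unpair1 x)
| eSnd x : eval RSnd x (unpair2 x)
| ePair f g x a b : eval f x a -> eval g x b -> eval (RPair f g) x (npair a b)
| eComp f g x y z : eval g x y -> eval f y z -> eval (RComp f g) x z
| ePrec0 f g x a : eval f x a -> eval (RPrec f g) (npair 0 x) a
| ePrecS f g n x a b : eval (RPrec f g) (npair n x) a ->
    eval g (npair n (npair a x)) b -> eval (RPrec f g) (npair n.+1 x) b
| eMu f x n : eval f (npair n x) 0 ->
    (forall m, (m < n)%N -> exists k, eval f (npair m x) k.+1) ->
    eval (RMu f) x n.

Definition rec_pred (P : nat -> Prop) : Prop :=
  exists c : rec, forall x, (P x -> eval c x 0) /\ (~ P x -> eval c x 1).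

Inductive term (C : Type) : Type :=
| TVar (n : nat)
| TCst (c : C)
| TAdd (s t : term C)
| TMul (s t : term C).
Arguments TVar {C}.

(* An L-structure: carrier with the interpretations of +, * and of the
   constants; the ring opposite, zero and one are recorded too, since
   "recursive ring" needs them. *)
Record lstruct (C : Type) := LStruct {
  lcar : Type;
  ladd : lcar -> lcar -> lcar;
  lmul : lcar -> lcar -> lcar;
  lopp : lcar -> lcar;
  lzero : lcar;
  lone : lcar;
  lcst : C -> lcar }.
Arguments lcar {C} l.
Arguments ladd {C} l _ _.
Arguments lmul {C} l _ _.
Arguments lopp {C} l _.
Arguments lzero {C} l.
Arguments lone {C} l.
Arguments lcst {C} l _.

Fixpoint teval (R : Type) (add mul : R -> R -> R) (D : Type) (cst : D -> R)
   (v : nat -> R) (t : term D) : R :=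
  match t with
  | TVar n => v n
  | TCst c => cst c
  | TAdd s u => add (teval add mul cst v s) (teval add mul cst v u)
  | TMul s u => mul (teval add mul cst v s) (teval add mul cst v u)
  end.

(* A finite conjunction of basic formulas t1 = t2 (the only relation is =). *)
Definition system (D : Type) := seq (term D * term D).

Definition holds (R : Type) (add mul : R -> R -> R) (D : Type) (cst : D -> R)
   (sys : system D) (v : nat -> R) : Prop :=
  foldr (fun e P => teval add mul cst v e.1 = teval add mul cst v e.2 /\ P)
        True sys.

(* variables 0..k-1 are the free ones (x), variables k, k+1, ... are
   existentially quantified (y) *)
Definition env (R : Type) (k : nat) (x : 'I_k -> R) (y : nat -> R) : nat -> R :=
  fun i => oapp x (y (i - k)%N) (insub i : option 'I_k).

Definition dioph_set C (A : lstruct C) (k : nat) (sys : system C)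
  : ('I_k -> lcar A) -> Prop :=
  fun x => exists y : nat -> lcar A,
    holds (@ladd C A) (@lmul C A) (@lcst C A) sys (env x y).
Arguments dioph_set {C} A k sys.

Definition is_dioph C (A : lstruct C) (k : nat) (S : ('I_k -> lcar A) -> Prop) :=
  exists sys : system C, forall x, S x <-> dioph_set A k sys x.
Arguments is_dioph {C} A k S.

Definition image_set (T U : Type) (k : nat) (d : T -> U) (S : ('I_k -> T) -> Prop)
  : ('I_k -> U) -> Prop :=
  fun z => exists x, S x /\ forall j, z j = d (x j).

Definition dioph_map C1 C2 (A : lstruct C1) (B : lstruct C2)
  (d : lcar A -> lcar B) : Prop :=
  forall k (S : ('I_k -> lcar A) -> Prop), is_dioph A k S ->
    is_dioph B k (image_set d S).

Fixpoint enc_term (D : Type) (encD : D -> nat) (t : term D) : nat :=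
  match t with
  | TVar n => npair 0 n
  | TCst c => npair 1 (encD c)
  | TAdd s u => npair 2 (npair (enc_term encD s) (enc_term encD u))
  | TMul s u => npair 3 (npair (enc_term encD s) (enc_term encD u))
  end.

Fixpoint enc_sys (D : Type) (encD : D -> nat) (sys : system D) : nat :=
  match sys with
  | [::] => 0%N
  | e :: s => (npair (npair (enc_term encD e.1) (enc_term encD e.2))
                     (enc_sys encD s)).+1
  end.

Definition effective_dioph_map C1 C2 (enc1 : C1 -> nat) (enc2 : C2 -> nat)
  (A : lstruct C1) (B : lstruct C2) (d : lcar A -> lcar B) : Prop :=
  exists c : rec, forall (k : nat) (sys : system C1), exists sys' : system C2,
    eval c (npair k (enc_sys enc1 sys)) (enc_sys enc2 sys') /\
    forall z, image_set d (dioph_set A k sys) z <-> dioph_set B k sys' z.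

Definition Sc C (A : lstruct C) (a : lcar A) : Prop :=
  is_dioph A 1 (fun x => x ord0 = a).
Arguments Sc {C} A a.

(* (dom, nu) is a recursive presentation of the subring
   R0 = nu(dom) of A: dom is a recursive set of codes, nu is injective on
   dom, R0 contains 0 and 1, and +, *, - are computable on codes. *)
Definition rec_numbering C (A : lstruct C) (dom : nat -> Prop)
  (nu : nat -> lcar A) : Prop :=
  rec_pred dom /\
  (forall n m, dom n -> dom m -> nu n = nu m -> n = m) /\
  (exists z, dom z /\ nu z = lzero A) /\
  (exists o, dom o /\ nu o = lone A) /\
  (exists c : rec, forall n m, dom n -> dom m -> exists r,
      [/\ eval c (npair n m) r, dom r & nu r = ladd A (nu n) (nu m)]) /\
  (exists c : rec, forall n m, dom n -> dom m -> exists r,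
      [/\ eval c (npair n m) r, dom r & nu r = lmul A (nu n) (nu m)]) /\
  (exists c : rec, forall n, dom n -> exists r,
      [/\ eval c n r, dom r & nu r = lopp A (nu n)]).
Arguments rec_numbering {C} A dom nu.

(* coefficients (extra constants inr n) all carry codes in dom *)
Fixpoint tcoef_ok (C : Type) (P : nat -> Prop) (t : term (C + nat)) : Prop :=
  match t with
  | TVar _ => True
  | TCst (inl _) => True
  | TCst (inr n) => P n
  | TAdd s u => tcoef_ok P s /\ tcoef_ok P u
  | TMul s u => tcoef_ok P s /\ tcoef_ok P u
  end.

Definition coef_ok (C : Type) (P : nat -> Prop) (sys : system (C + nat)) :=
  foldr (fun e Q => tcoef_ok P e.1 /\ tcoef_ok P e.2 /\ Q) True sys.

Definition enc_sum (C : Type) (encC : C -> nat) (d : C + nat) : nat :=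
  match d with inl c => npair 0 (encC c) | inr n => npair 1 n end.

Definition coef_interp C (A : lstruct C) (nu : nat -> lcar A) (d : C + nat)
  : lcar A :=
  match d with inl c => lcst A c | inr n => nu n end.

Definition solvable C (A : lstruct C) (nu : nat -> lcar A)
  (sys : system (C + nat)) : Prop :=
  exists v : nat -> lcar A,
    holds (@ladd C A) (@lmul C A) (coef_interp nu) sys v.
Arguments solvable {C} A nu sys.

(* Hilbert's tenth problem over (A, L) has a negative answer: there is a
   recursive ring R0 with (constants of L) c R0 c S_c'(L), such that no
   algorithm decides solvability of finite systems of basic formulas with
   extra coefficients in R0. *)
Definition HTP_negative C (encC : C -> nat) (A : lstruct C) : Prop :=
  exists (dom : nat -> Prop) (nu : nat -> lcar A),
    [/\ rec_numbering A dom nu,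
        (forall c, exists n, dom n /\ nu n = lcst A c),
        (forall n, dom n -> Sc A (nu n)) &
        ~ exists c : rec, forall sys : system (C + nat), coef_ok dom sys ->
            (solvable A nu sys -> eval c (enc_sys (enc_sum encC) sys) 0) /\
            (~ solvable A nu sys -> eval c (enc_sys (enc_sum encC) sys) 1)].

Inductive LT_const := cT0 | cT1 | cTT.
Definition enc_LT (c : LT_const) : nat :=
  match c with cT0 => 0 | cT1 => 1 | cTT => 2 end.

Inductive Ltau_const := ct0 | ct1 | ctIota | ctTau.
Definition enc_Ltau (c : Ltau_const) : nat :=
  match c with ct0 => 0 | ct1 => 1 | ctIota => 2 | ctTau => 3 end.

(* F[[T]] : sequences of coefficients, Cauchy product *)
Definition ps_mul (F : ringType) (a b : nat -> F) : nat -> F :=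
  fun n => \sum_(i < n.+1) a i * b (n - i)%N.

Definition psT (F : ringType) : lstruct LT_const :=
  {| lcar := nat -> F;
     ladd := fun a b i => a i + b i;
     lmul := @ps_mul F;
     lopp := fun a i => - a i;
     lzero := fun _ => 0;
     lone := fun i => (i == 0%N)%:R;
     lcst := fun c => match c with
                      | cT0 => fun _ => 0
                      | cT1 => fun i => (i == 0%N)%:R
                      | cTT => fun i => (i == 1%N)%:R
                      end |}.

(* K{{tau}} : (sum a_i tau^i)(sum b_j tau^j) = sum_k (sum_{i+j=k} a_i b_j^{q^i}) tau^k *)
Definition tw_mul (K : ringType) (q : nat) (a b : nat -> K) : nat -> K :=
  fun k => \sum_(i < k.+1) a i * (b (k - i)%N) ^+ (q ^ i).

Definition tw_scalar (K : ringType) (a : K) : nat -> K :=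
  fun i => if i == 0%N then a else 0.

(* the A-field structure iota0 : F_q[T] -> K with iota0(T) = 0 *)
Definition iota0_T (K : ringType) : K := 0.

Definition tps (K : ringType) (q : nat) : lstruct Ltau_const :=
  {| lcar := nat -> K;
     ladd := fun a b i => a i + b i;
     lmul := tw_mul q;
     lopp := fun a i => - a i;
     lzero := fun _ => 0;
     lone := fun i => (i == 0%N)%:R;
     lcst := fun c => match c with
                      | ct0 => fun _ => 0
                      | ct1 => fun i => (i == 0%N)%:R
                      | ctIota => tw_scalar (iota0_T K)
                      | ctTau => fun i => (i == 1%N)%:R
                      end |}.

(* phi(sum a_i T^i) = sum a_i tau^i, F_q seen inside K via iota *)
Definition carlitz_ext (F K : ringType) (iota : F -> K) (f : nat -> F) : nat -> K :=
  fun i => iota (f i).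

Arguments dioph_map {C1 C2} A B d.
Arguments effective_dioph_map {C1 C2} enc1 enc2 A B d.
Arguments HTP_negative {C} encC A.

(* Main.v *)
Require Import Defs.
From mathcomp Require Import all_boot all_order all_algebra all_field.
From mathcomp Require Import zify.
From Stdlib Require Import FunctionalExtensionality.
Set Implicit Arguments. Unset Strict Implicit. Unset Printing Implicit Defensive.

Lemma npairS a b : (npair a b).+1 = 2 ^ a * (b.*2).+1.
Proof. by rewrite /npair prednK // muln_gt0 expn_gt0. Qed.

Lemma unpair1K a b : unpair1 (npair a b) = a.
Proof.
rewrite /unpair1 npairS lognM ?expn_gt0 // pfactorK // logn_coprime ?addn0 //.
by rewrite coprime2n /= odd_double.
Qed.

Lemma unpair2K a b : unpair2 (npair a b) = b.
Proof.
rewrite /unpair2 -/(unpair1 (npair a b)) unpair1K npairS mulKn ?expn_gt0 //=.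
by rewrite doubleK.
Qed.

Lemma npair_surj x : npair (unpair1 x) (unpair2 x) = x.
Proof.
have [m cm Hm] := pfactor_coprime (isT : prime 2) (ltn0Sn x).
rewrite /unpair2 -/(unpair1 x). rewrite /unpair1 in Hm *.
set e := logn 2 x.+1 in Hm *.
rewrite Hm mulnK ?expn_gt0 //.
rewrite coprime2n in cm.
have mpos : 0 < m by case: m cm Hm.
have hm : (m.-1)./2.*2 = m.-1.
  have := odd_double_half m.-1. case: m cm mpos {Hm} => // m' /= /negbTE ->. by rewrite add0n.
apply: succn_inj. rewrite npairS hm prednK // mulnC -Hm //.
Qed.

Lemma npair_inj a b c d : npair a b = npair c d -> a = c /\ b = d.
Proof. move=> H; split; [by rewrite -(unpair1K a b) H unpair1K | by rewrite -(unpair2K a b) H unpair2K]. Qed.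

Lemma npair_ge1 a b : a <= npair a b.
Proof.
have : a < 2 ^ a by apply: ltn_expl.
have := npairS a b. nia.
Qed.

Lemma npair_ge2 a b : b.*2 <= npair a b.
Proof.
have : 0 < 2 ^ a by rewrite expn_gt0.
have := npairS a b. nia.
Qed.

Lemma npair_gt2 t y : 2 <= t -> y < npair t y.
Proof.
move=> Ht. have : 2 ^ 2 <= 2 ^ t by rewrite leq_exp2l.
have := npairS t y. nia.
Qed.

Definition computes (c : rec) (f : nat -> nat) := forall x, eval c x (f x).

Lemma computes_ext c f g : computes c f -> (forall x, f x = g x) -> computes c g.
Proof. by move=> H E x; rewrite -E. Qed.

Lemma c_fst : computes RFst unpair1. Proof. exact: eFst. Qed.
Lemma c_snd : computes RSnd unpair2. Proof. exact: eSnd. Qed.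
Lemma c_succ : computes RSucc S. Proof. exact: eSucc. Qed.
Lemma c_zero : computes RZero (fun _ => 0). Proof. exact: eZero. Qed.
Lemma c_comp c1 c2 f g : computes c1 f -> computes c2 g -> computes (RComp c1 c2) (fun x => f (g x)).
Proof. by move=> H1 H2 x; apply: eComp (H2 x) (H1 _). Qed.
Lemma c_pair c1 c2 f g : computes c1 f -> computes c2 g -> computes (RPair c1 c2) (fun x => npair (f x) (g x)).
Proof. by move=> H1 H2 x; apply: ePair. Qed.

Definition RId := RPair RFst RSnd.
Lemma c_id : computes RId id.
Proof. move=> x; have := c_pair c_fst c_snd x; by rewrite npair_surj. Qed.

Fixpoint RConst m := match m with 0 => RZero | m'.+1 => RComp RSucc (RConst m') end.
Lemma c_const m : computes (RConst m) (fun _ => m).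
Proof. elim: m => [|m IH] /=; [exact: c_zero | exact: c_comp c_succ IH]. Qed.

Fixpoint prim (f g : nat -> nat) n y := match n with
 | 0 => f y | n'.+1 => g (npair n' (npair (prim f g n' y) y)) end.

Lemma eval_prec cf cg f g : computes cf f -> computes cg g ->
  forall n y, eval (RPrec cf cg) (npair n y) (prim f g n y).
Proof.
move=> Hf Hg; elim=> [|n IH] y /=; first exact: ePrec0.
exact: ePrecS (IH y) (Hg _).
Qed.

Lemma c_prec cf cg f g : computes cf f -> computes cg g ->
  computes (RPrec cf cg) (fun x => prim f g (unpair1 x) (unpair2 x)).
Proof. move=> Hf Hg x. rewrite -{1}(npair_surj x). exact: eval_prec. Qed.

Definition RIfz ct cu cv := RComp (RPrec cu (RComp cv (RComp RSnd RSnd))) (RPair ct RId).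
Lemma c_ifz ct cu cv t u v : computes ct t -> computes cu u -> computes cv v ->
  computes (RIfz ct cu cv) (fun x => if t x == 0 then u x else v x).
Proof.
move=> Ht Hu Hv.
have H := c_comp (c_prec Hu (c_comp Hv (c_comp c_snd c_snd))) (c_pair Ht c_id).
apply: (computes_ext H) => x /=. rewrite !unpair1K !unpair2K.
by case: (t x) => //= n; rewrite !unpair2K.
Qed.

Definition RPredP := RPrec RZero RFst.
Definition RPred c := RComp RPredP (RPair c RZero).
Lemma c_pred c f : computes c f -> computes (RPred c) (fun x => (f x).-1).
Proof.
move=> H. have H2 := c_comp (c_prec c_zero c_fst) (c_pair H c_zero).
apply: (computes_ext H2) => x /=. rewrite unpair1K unpair2K.
by case: (f x) => //= n; rewrite unpair1K.
Qed.

Definition RSubP := RPrec RId (RPred (RComp RFst RSnd)).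
Lemma prim_sub n y : prim id (fun z => (unpair1 (unpair2 z)).-1) n y = y - n.
Proof. elim: n => [|n IH] /=; first by rewrite subn0. by rewrite unpair2K unpair1K IH subnS. Qed.
Definition RSub ca cb := RComp RSubP (RPair cb ca).
Lemma c_sub ca cb a b : computes ca a -> computes cb b -> computes (RSub ca cb) (fun x => a x - b x).
Proof.
move=> Ha Hb. have H := c_comp (c_prec c_id (c_pred (c_comp c_fst c_snd))) (c_pair Hb Ha).
apply: (computes_ext H) => x /=. by rewrite !unpair1K !unpair2K prim_sub.
Qed.

Definition RIfeq ca cb cu cv := RIfz (RSub ca cb) (RIfz (RSub cb ca) cu cv) cv.
Lemma c_ifeq ca cb cu cv a b u v : computes ca a -> computes cb b -> computes cu u -> computes cv v ->
  computes (RIfeq ca cb cu cv) (fun x => if a x == b x then u x else v x).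
Proof.
move=> Ha Hb Hu Hv.
apply: (computes_ext (c_ifz (c_sub Ha Hb) (c_ifz (c_sub Hb Ha) Hu Hv) Hv)) => x /=.
case: (ltngtP (a x) (b x)) => H.
- by rewrite (eqP (ltnW H)) ifF //; apply/negbTE; rewrite -lt0n subn_gt0.
- by rewrite ifF //; apply/negbTE; rewrite -lt0n subn_gt0.
- by rewrite H subnn.
Qed.

Definition RIterP := RPrec RId (RComp RSnd (RComp RFst RSnd)).
Lemma c_iter ca cb a b : computes ca a -> computes cb b ->
  computes (RComp RIterP (RPair ca cb)) (fun x => iter (a x) unpair2 (b x)).
Proof.
move=> Ha Hb. have H := c_comp (c_prec c_id (c_comp c_snd (c_comp c_fst c_snd))) (c_pair Ha Hb).
apply: (computes_ext H) => x /=. rewrite !unpair1K !unpair2K.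
elim: (a x) => //= n ->. by rewrite unpair2K unpair1K.
Qed.

Fixpoint Tab (s : nat -> nat) n := match n with
 | 0 => 0 | n'.+1 => npair (s (npair n' (Tab s n'))) (Tab s n') end.
Definition cov s x := s (npair x (Tab s x)).
Definition lk p i := unpair1 (iter (unpair1 p - i.+1) unpair2 (unpair2 p)).

Lemma lk_Tab s n i : i < n -> lk (npair n (Tab s n)) i = cov s i.
Proof.
rewrite /lk unpair1K unpair2K.
elim: n => // n IH. rewrite ltnS leq_eqVlt => /orP [/eqP->|lt].
  by rewrite subnn /= unpair1K.
by rewrite subSS -(subnSK lt) iterSr /= unpair2K IH.
Qed.

Definition RCov cs := RComp RFst (RComp (RPrec RZero
   (RPair (RComp cs (RPair RFst (RComp RFst RSnd))) (RComp RFst RSnd))) (RPair RSucc RId)).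
Lemma c_cov cs s : computes cs s -> computes (RCov cs) (cov s).
Proof.
move=> Hs.
have H := c_comp c_fst (c_comp (c_prec c_zero (c_pair (c_comp Hs (c_pair c_fst (c_comp c_fst c_snd))) (c_comp c_fst c_snd))) (c_pair c_succ c_id)).
apply: (computes_ext H) => x /=. rewrite unpair1K unpair2K.
suff -> : forall n, prim (fun _ => 0) (fun x0 => npair (s (npair (unpair1 x0) (unpair1 (unpair2 x0)))) (unpair1 (unpair2 x0))) n x = Tab s n.
  by rewrite /= unpair1K.
elim=> [|n IH]; first by []. by rewrite /= !(unpair1K, unpair2K) IH.
Qed.

Definition RLk cp ci := RComp RFst (RComp RIterP (RPair (RSub (RComp RFst cp) (RComp RSucc ci)) (RComp RSnd cp))).
Lemma c_lk cp ci p i : computes cp p -> computes ci i -> computes (RLk cp ci) (fun x => lk (p x) (i x)).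
Proof.
move=> Hp Hi. exact: c_comp c_fst (c_iter (c_sub (c_comp c_fst Hp) (c_comp c_succ Hi)) (c_comp c_snd Hp)).
Qed.

Section Trans.
Variables (L1 L2 : nat) (cL1 cL2 : rec).
Hypotheses (HL1 : computes cL1 (fun _ => L1)) (HL2 : computes cL2 (fun _ => L2)).

Definition stepT p :=
  let x := unpair1 p in
  if x == npair 1 L1 then npair 1 L2
  else if 2 - unpair1 x == 0 then
    npair (unpair1 x) (npair (lk p (unpair1 (unpair2 x))) (lk p (unpair2 (unpair2 x))))
  else x.

Definition RStepT := RIfeq RFst (RPair (RConst 1) cL1) (RPair (RConst 1) cL2)
  (RIfz (RSub (RConst 2) (RComp RFst RFst))
     (RPair (RComp RFst RFst) (RPair (RLk RId (RComp RFst (RComp RSnd RFst)))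
                                     (RLk RId (RComp RSnd (RComp RSnd RFst))))) RFst).

Lemma c_stepT : computes RStepT stepT.
Proof.
have H := c_ifeq c_fst (c_pair (c_const 1) HL1) (c_pair (c_const 1) HL2)
  (c_ifz (c_sub (c_const 2) (c_comp c_fst c_fst))
     (c_pair (c_comp c_fst c_fst) (c_pair (c_lk c_id (c_comp c_fst (c_comp c_snd c_fst)))
                                     (c_lk c_id (c_comp c_snd (c_comp c_snd c_fst))))) c_fst).
exact: (computes_ext H).
Qed.

Definition trT := cov stepT.
Definition RTrT := RCov RStepT.
Lemma c_trT : computes RTrT trT.
Proof. exact: c_cov c_stepT. Qed.

Lemma trT_var n : trT (npair 0 n) = npair 0 n.
Proof.
rewrite /trT /cov /stepT !unpair1K.
case: eqP => [/npair_inj [] //|_]. by rewrite ?unpair1K.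
Qed.

Lemma trT_cst c : trT (npair 1 c) = if c == L1 then npair 1 L2 else npair 1 c.
Proof.
rewrite /trT /cov /stepT !unpair1K.
case: eqP => [/npair_inj [] _ ->|ne]; first by rewrite eqxx.
case: (c =P L1) => [E|_]; first by case: ne; rewrite E.
by [].
Qed.

Lemma trT_node t a b : 2 <= t ->
  trT (npair t (npair a b)) = npair t (npair (trT a) (trT b)).
Proof.
move=> Ht. rewrite {1}/trT /cov /stepT !unpair1K.
case: eqP => [/npair_inj [] E _|_]; first by rewrite E in Ht.
have -> : 2 - t == 0 by rewrite subn_eq0.
rewrite !(unpair1K, unpair2K).
have lt := @npair_gt2 t (npair a b) Ht.
have hb : b <= npair a b by apply: leq_trans (npair_ge2 _ _); rewrite -addnn leq_addr.
have ha := npair_ge1 a b.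
rewrite !lk_Tab //; [exact: leq_ltn_trans hb lt | exact: leq_ltn_trans ha lt].
Qed.

Definition stepS p :=
  let x := unpair1 p in
  if x == 0 then 0 else
  (npair (npair (trT (unpair1 (unpair1 x.-1))) (trT (unpair2 (unpair1 x.-1)))) (lk p (unpair2 x.-1))).+1.

Definition RStepS := RIfz RFst (RConst 0)
  (RComp RSucc (RPair (RPair (RComp RTrT (RComp RFst (RComp RFst (RPred RFst))))
                             (RComp RTrT (RComp RSnd (RComp RFst (RPred RFst)))))
                      (RLk RId (RComp RSnd (RPred RFst))))).

Lemma c_stepS : computes RStepS stepS.
Proof.
have H := c_ifz c_fst (c_const 0)
  (c_comp c_succ (c_pair (c_pair (c_comp c_trT (c_comp c_fst (c_comp c_fst (c_pred c_fst))))
                             (c_comp c_trT (c_comp c_snd (c_comp c_fst (c_pred c_fst)))))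
                      (c_lk c_id (c_comp c_snd (c_pred c_fst))))).
exact: (computes_ext H).
Qed.

Definition trS := cov stepS.
Definition RTrS := RCov RStepS.
Lemma c_trS : computes RTrS trS.
Proof. exact: c_cov c_stepS. Qed.

Lemma trS_nil : trS 0 = 0.
Proof. by rewrite /trS /cov /stepS unpair1K. Qed.

Lemma trS_cons a b r : trS (npair (npair a b) r).+1 = (npair (npair (trT a) (trT b)) (trS r)).+1.
Proof.
rewrite {1}/trS /cov /stepS unpair1K.
have -> : ((npair (npair a b) r).+1 == 0) = false by [].
rewrite succnK !(unpair1K, unpair2K) lk_Tab //.
rewrite ltnS; apply: leq_trans (npair_ge2 _ _); by rewrite -addnn leq_addr.
Qed.

Definition cons_step z :=
  let j := unpair1 z in
  (npair (npair (npair 3 (npair (npair 0 j) (npair 1 L2))) (npair 3 (npair (npair 1 L2) (npair 0 j))))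
         (unpair1 (unpair2 z))).+1.

Definition RConsStep := RComp RSucc (RPair
   (RPair (RPair (RConst 3) (RPair (RPair (RConst 0) RFst) (RPair (RConst 1) cL2)))
          (RPair (RConst 3) (RPair (RPair (RConst 1) cL2) (RPair (RConst 0) RFst))))
   (RComp RFst RSnd)).

Lemma c_consstep : computes RConsStep cons_step.
Proof.
have H := c_comp c_succ (c_pair
   (c_pair (c_pair (c_const 3) (c_pair (c_pair (c_const 0) c_fst) (c_pair (c_const 1) HL2)))
          (c_pair (c_const 3) (c_pair (c_pair (c_const 1) HL2) (c_pair (c_const 0) c_fst))))
   (c_comp c_fst c_snd)).
exact: (computes_ext H).
Qed.

Definition RFull := RPrec RTrS RConsStep.
Lemma c_full M s : eval RFull (npair M s) (prim trS cons_step M s).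
Proof. have := eval_prec c_trS c_consstep M s. exact. Qed.

End Trans.

Section Enc.
Variables (D1 D2 : Type) (enc1 : D1 -> nat) (enc2 : D2 -> nat) (cm : D1 -> D2) (tauc : D2) (L1 L2 : nat).
Hypothesis Hcm : forall d, enc2 (cm d) = if enc1 d == L1 then L2 else enc1 d.
Hypothesis Htau : enc2 tauc = L2.

Fixpoint tmap (t : term D1) : term D2 :=
  match t with
  | TVar n => TVar n
  | TCst c => TCst (cm c)
  | TAdd s u => TAdd (tmap s) (tmap u)
  | TMul s u => TMul (tmap s) (tmap u)
  end.

Lemma enc_tmap t : trT L1 L2 (enc_term enc1 t) = enc_term enc2 (tmap t).
Proof.
elim: t => [n|c|s IHs u IHu|s IHs u IHu] /=.
- exact: trT_var.
- rewrite trT_cst Hcm. by case: eqP.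
- by rewrite trT_node // IHs IHu.
- by rewrite trT_node // IHs IHu.
Qed.

Definition smap (sys : system D1) : system D2 := map (fun e => (tmap e.1, tmap e.2)) sys.

Lemma enc_smap sys : trS L1 L2 (enc_sys enc1 sys) = enc_sys enc2 (smap sys).
Proof.
elim: sys => [|e s IH] /=; first exact: trS_nil.
by rewrite trS_cons !enc_tmap IH.
Qed.

Definition constr j : term D2 * term D2 := (TMul (TVar j) (TCst tauc), TMul (TCst tauc) (TVar j)).

Fixpoint fullsys (sys : system D1) M : system D2 :=
  match M with 0 => smap sys | M'.+1 => constr M' :: fullsys sys M' end.

Lemma enc_full sys M : prim (trS L1 L2) (cons_step L2) M (enc_sys enc1 sys) = enc_sys enc2 (fullsys sys M).
Proof.
elim: M => [|M IH] /=; first exact: enc_smap.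
by rewrite /cons_step !(unpair1K, unpair2K) IH Htau.
Qed.
End Enc.

Section Vars.
Variable D : Type.
Fixpoint tvb M (t : term D) : Prop :=
  match t with
  | TVar n => n < M
  | TCst _ => True
  | TAdd s u => tvb M s /\ tvb M u
  | TMul s u => tvb M s /\ tvb M u
  end.

Lemma tvb_mono M N t : M <= N -> tvb M t -> tvb N t.
Proof.
move=> MN; elim: t => [n|c|s IHs u IHu|s IHs u IHu] //=.
- by move=> H; apply: leq_trans MN.
- by case=> /IHs ? /IHu ?.
- by case=> /IHs ? /IHu ?.
Qed.

Lemma tvb_enc (enc : D -> nat) t : tvb (enc_term enc t).+1 t.
Proof.
have hb : forall a b, b <= npair a b by move=> a b; apply: leq_trans (npair_ge2 _ _); rewrite -addnn leq_addr.
have ha := npair_ge1.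
elim: t => [n|c|s IHs u IHu|s IHs u IHu] //=.
- by rewrite ltnS hb.
- split.
  + apply: tvb_mono IHs. rewrite ltnS. apply: leq_trans (hb _ _). exact: ha.
  + apply: tvb_mono IHu. rewrite ltnS. apply: leq_trans (hb _ _). exact: hb.
- split.
  + apply: tvb_mono IHs. rewrite ltnS. apply: leq_trans (hb _ _). exact: ha.
  + apply: tvb_mono IHu. rewrite ltnS. apply: leq_trans (hb _ _). exact: hb.
Qed.

Definition svb M (sys : system D) : Prop :=
  foldr (fun e P => tvb M e.1 /\ tvb M e.2 /\ P) True sys.

Lemma svb_mono M N sys : M <= N -> svb M sys -> svb N sys.
Proof.
move=> MN; elim: sys => [|e s IH] //= [h1 [h2 h3]].
by split; [|split]; [apply: tvb_mono h1|apply: tvb_mono h2|apply: IH].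
Qed.

Lemma svb_enc (enc : D -> nat) sys : svb (enc_sys enc sys).+1 sys.
Proof.
have hb : forall a b, b <= npair a b by move=> a b; apply: leq_trans (npair_ge2 _ _); rewrite -addnn leq_addr.
have ha := npair_ge1.
elim: sys => [|e s IH] //=.
split; [|split].
- apply: tvb_mono (tvb_enc enc e.1). rewrite !ltnS. apply: leqW. apply: leq_trans (ha _ _). exact: ha.
- apply: tvb_mono (tvb_enc enc e.2). rewrite !ltnS. apply: leqW. apply: leq_trans (ha _ _). exact: hb.
- apply: svb_mono IH. rewrite !ltnS. apply: leqW. exact: hb.
Qed.
End Vars.

Import GRing.Theory.
Local Open Scope ring_scope.

Section Math.
Variables (F : finFieldType) (K : fieldType) (iota : {rmorphism F -> K}).
Local Notation q := #|F|.
Local Notation phi := (carlitz_ext iota).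
Definition tauS : nat -> K := fun i => (i == 1%N)%:R.

Lemma q_gt1 : (1 < q)%N.
Proof. apply/card_gt1P; exists 0, 1; split => //; by rewrite eq_sym oner_neq0. Qed.

Lemma expF_pow (x : F) i : x ^+ (q ^ i) = x.
Proof. elim: i => [|i IH]; first by rewrite expn0 expr1. by rewrite expnSr exprM IH expf_card. Qed.

Lemma phi_add a b : phi (fun i => a i + b i) = (fun i => phi a i + phi b i).
Proof. apply: functional_extensionality => i. by rewrite /carlitz_ext rmorphD. Qed.

Lemma phi_mul a b : phi (ps_mul a b) = tw_mul q (phi a) (phi b).
Proof.
apply: functional_extensionality => k. rewrite /carlitz_ext /ps_mul /tw_mul rmorph_sum.
apply: eq_bigr => i _. by rewrite rmorphM -rmorphXn expF_pow.
Qed.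

Lemma phi_inj a b : phi a = phi b -> a = b.
Proof.
move=> E; apply: functional_extensionality => i.
apply: (fmorph_inj iota). by have := congr1 (fun f => f i) E.
Qed.

Lemma twm_tau_r (x : nat -> K) i : tw_mul q x tauS i.+1 = x i.
Proof.
rewrite /tw_mul big_ord_recr /= big_ord_recr /= subnn subSnn /tauS /=.
rewrite expr0n expn_eq0 (negbTE (lt0n_neq0 (ltnW q_gt1))) /= mulr0 addr0 expr1n mulr1.
rewrite big1 ?add0r // => l _.
have : (2 <= i.+1 - l)%N by have := ltn_ord l; lia.
case: (i.+1 - l)%N => [|[|n]] //= _. 
by rewrite expr0n expn_eq0 (negbTE (lt0n_neq0 (ltnW q_gt1))) mulr0.
Qed.

Lemma twm_tau_l (x : nat -> K) i : tw_mul q tauS x i.+1 = x i ^+ q.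
Proof.
rewrite /tw_mul big_ord_recl big_ord_recl /tauS /= mul0r add0r mul1r subn1 /= expn1.
rewrite big1 ?addr0 // => l _. by rewrite mul0r.
Qed.

Lemma twm_tau_0 (x : nat -> K) : tw_mul q x tauS 0 = tw_mul q tauS x 0.
Proof. by rewrite /tw_mul !big_ord_recr !big_ord0 /tauS /= mulr0 mul0r. Qed.

Lemma phi_comm a : tw_mul q (phi a) tauS = tw_mul q tauS (phi a).
Proof.
apply: functional_extensionality => [[|i]]; first exact: twm_tau_0.
by rewrite twm_tau_r twm_tau_l /carlitz_ext -rmorphXn expf_card.
Qed.

Definition pre (a : K) : F := if [pick f | iota f == a] is Some f then f else 0.

Lemma pre_ok a : a ^+ q = a -> iota (pre a) = a.
Proof.
move=> Ha. rewrite /pre. case: pickP => [f /eqP //|H]. exfalso.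
pose p : {poly K} := 'X^q - 'X.
have pn0 : size p = q.+1.
  rewrite /p size_polyDl ?size_polyXn // size_polyN size_polyX. by rewrite ltnS q_gt1.
have : (size (a :: map iota (enum F)) < size p)%N.
  apply: max_poly_roots.
  - by rewrite -size_poly_eq0 pn0.
  - rewrite /= /root /p !hornerE Ha subrr eqxx /=.
    apply/allP => x /mapP [f _ ->]. by rewrite /root !hornerE -rmorphXn expf_card subrr.
  - rewrite /= map_inj_uniq ?enum_uniq ?andbT; last exact: fmorph_inj.
    apply/mapP => [[f _ E]]. by move: (H f); rewrite -E eqxx.
by rewrite pn0 /= size_map -cardE ltnn.
Qed.

Lemma fixed_phi (x : nat -> K) : tw_mul q x tauS = tw_mul q tauS x -> phi (fun n => pre (x n)) = x.
Proof.
move=> E; apply: functional_extensionality => i.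
rewrite /carlitz_ext pre_ok //. have := congr1 (fun f => f i.+1) E.
by rewrite /= twm_tau_r twm_tau_l.
Qed.

Section Gen.
Variables (D1 D2 : Type) (cst1 : D1 -> nat -> F) (cst2 : D2 -> nat -> K) (cm : D1 -> D2) (tauc : D2).
Hypothesis Hc : forall d, cst2 (cm d) = phi (cst1 d).
Hypothesis Ht : cst2 tauc = tauS.

Local Notation add1 := (fun (a b : nat -> F) i => a i + b i).
Local Notation add2 := (fun (a b : nat -> K) i => a i + b i).
Local Notation mul1 := (@ps_mul F).
Local Notation mul2 := (@tw_mul K q).

Lemma teval_tmap v t : teval add2 mul2 cst2 (fun i => phi (v i)) (tmap cm t) = phi (teval add1 mul1 cst1 v t).
Proof.
elim: t => [n|c|s IHs u IHu|s IHs u IHu] //=.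
- by rewrite IHs IHu phi_add.
- by rewrite IHs IHu phi_mul.
Qed.

Lemma teval_ext (D : Type) (R : Type) add mul (cst : D -> R) M (w1 w2 : nat -> R) t :
  tvb M t -> (forall i, (i < M)%N -> w1 i = w2 i) -> teval add mul cst w1 t = teval add mul cst w2 t.
Proof.
move=> Hb E; elim: t Hb => [n|c|s IHs u IHu|s IHs u IHu] //=; first exact: E.
- by case=> /IHs -> /IHu ->.
- by case=> /IHs -> /IHu ->.
Qed.

Lemma tvb_tmap M t : tvb M t -> tvb M (tmap cm t).
Proof. elim: t => //= s IHs u IHu [/IHs ? /IHu ?] //. Qed.

Lemma full_fwd sys M v : holds add1 mul1 cst1 sys v ->
  holds add2 mul2 cst2 (fullsys cm tauc sys M) (fun i => phi (v i)).
Proof.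
elim: M => [|M IH] /=.
  elim: sys => [|e s IHs] //= [E H]. split; last exact: IHs.
  by rewrite !teval_tmap E.
move=> H; split; last exact: IH.
by rewrite Ht phi_comm.
Qed.

Lemma full_bwd sys M w : svb M sys -> holds add2 mul2 cst2 (fullsys cm tauc sys M) w ->
  exists v, (forall i, (i < M)%N -> w i = phi (v i)) /\ holds add1 mul1 cst1 sys v.
Proof.
move=> Hb H. exists (fun i n => pre (w i n)).
have Hw : forall i, (i < M)%N -> w i = phi (fun n => pre (w i n)).
  clear Hb. move: H. elim: M => [|M IH] //= [E H] i.
  rewrite ltnS leq_eqVlt => /orP [/eqP ->|lt]; last exact: IH.
  by rewrite fixed_phi // -Ht.
split => //.
have Hs : holds add2 mul2 cst2 (smap cm sys) w by clear Hb Hw; elim: M H => //= M IH [_ ?]; apply: IH.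
clear H. elim: sys Hb Hs => [|e s IHs] //= [b1 [b2 b3]] [E H2]. split; last exact: IHs.
apply: phi_inj. rewrite -!teval_tmap.
rewrite -(teval_ext add2 mul2 cst2 (tvb_tmap b1) Hw) -(teval_ext add2 mul2 cst2 (tvb_tmap b2) Hw).
exact: E.
Qed.
End Gen.
End Math.

Import GRing.Theory.
Local Open Scope ring_scope.

Definition cm1 (c : LT_const) : Ltau_const :=
  match c with cT0 => ct0 | cT1 => ct1 | cTT => ctTau end.
Definition cm2 (d : LT_const + nat) : Ltau_const + nat :=
  match d with inl c => inl (cm1 c) | inr n => inr n end.

Definition RAdd := RPrec RSucc (RComp RSucc (RComp RFst RSnd)).
Lemma prim_add k s : prim S (fun z => (unpair1 (unpair2 z)).+1) k s = (s.+1 + k)%N.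
Proof. elim: k => [|k IH] /=; first by rewrite addn0. by rewrite !(unpair1K, unpair2K) IH addnS. Qed.

Definition Prog1 := RComp (RFull (RConst 2) (RConst 3)) (RPair RAdd RSnd).

Lemma eval_prog1 k s : eval Prog1 (npair k s) (prim (trS 2 3) (cons_step 3) (s.+1 + k) s).
Proof.
apply: eComp (c_full (c_const 2) (c_const 3) _ _).
have := c_pair (c_prec c_succ (c_comp c_succ (c_comp c_fst c_snd))) c_snd (npair k s).
by rewrite !(unpair1K, unpair2K) prim_add.
Qed.

Definition Prog2 := RComp (RFull (RPair (RConst 0) (RConst 2)) (RPair (RConst 0) (RConst 3))) (RPair RSucc RId).

Lemma eval_prog2 s : eval Prog2 s (prim (trS (npair 0 2) (npair 0 3)) (cons_step (npair 0 3)) s.+1 s).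
Proof.
apply: eComp (c_full (c_pair (c_const 0) (c_const 2)) (c_pair (c_const 0) (c_const 3)) _ _).
exact: (c_pair c_succ c_id s).
Qed.

Lemma env_val (R : Type) k (x : 'I_k -> R) y (j : 'I_k) : env x y j = x j.
Proof. by rewrite /env valK. Qed.

Lemma env_ge (R : Type) k (x : 'I_k -> R) y i : (k <= i)%N -> env x y i = y (i - k)%N.
Proof. move=> H; rewrite /env insubF //; by rewrite ltnNge H. Qed.

Section Main.
Variables (F : finFieldType) (K : fieldType) (iota : {rmorphism F -> K}).
Local Notation q := #|F|.
Local Notation phi := (carlitz_ext iota).

Lemma Hc1 d : lcst (tps K q) (cm1 d) = phi (lcst (psT F) d).
Proof.
apply: functional_extensionality => i; rewrite /carlitz_ext.
by case: d => /=; rewrite ?rmorph0 ?rmorph_nat.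
Qed.

Lemma Ht1 : lcst (tps K q) ctTau = tauS K.
Proof. by []. Qed.

Lemma Hcm1 d : enc_Ltau (cm1 d) = if enc_LT d == 2%N then 3%N else enc_LT d.
Proof. by case: d. Qed.

Lemma eff_part k sys : forall z,
  image_set phi (dioph_set (psT F) k sys) z <->
  dioph_set (tps K q) k (fullsys cm1 ctTau sys ((enc_sys enc_LT sys).+1 + k)) z.
Proof.
set M := ((enc_sys enc_LT sys).+1 + k)%N.
move=> z; split.
- case=> x [[y Hy] Hz].
  exists (fun i => phi (y i)).
  have -> : env z (fun i => phi (y i)) = fun i => phi (env x y i).
    apply: functional_extensionality => i; rewrite /env.
    by case: insub => [j|] //=.
  exact: (full_fwd Hc1 Ht1 M Hy).
- case=> y' Hy.
  have Hb : svb M sys by apply: svb_mono (svb_enc enc_LT sys); rewrite /M leq_addr.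
  have [v [Hv Hs]] := full_bwd Hc1 Ht1 Hb Hy.
  exists (fun j => v j); split.
    exists (fun i => v (i + k)%N).
    have -> : env (fun j : 'I_k => v j) (fun i => v (i + k)%N) = v.
      apply: functional_extensionality => i.
      case: (ltnP i k) => lt; first by rewrite -[i]/(val (Ordinal lt)) env_val.
      by rewrite env_ge // subnK.
    exact: Hs.
  move=> j. rewrite -Hv; first by rewrite env_val.
  rewrite /M. apply: leq_trans (ltn_ord j) _. exact: leq_addl.
Qed.

Lemma effective : effective_dioph_map enc_LT enc_Ltau (psT F) (tps K q) phi.
Proof.
exists Prog1 => k sys.
exists (fullsys cm1 ctTau sys ((enc_sys enc_LT sys).+1 + k)); split; last exact: eff_part.
rewrite -(@enc_full _ _ _ _ _ ctTau _ _ Hcm1 (erefl 3%N)). exact: eval_prog1.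
Qed.

Lemma dioph : dioph_map (psT F) (tps K q) phi.
Proof.
move=> k S [sys Hsys].
exists (fullsys cm1 ctTau sys ((enc_sys enc_LT sys).+1 + k)) => z.
rewrite -eff_part. split; case=> x [Sx Hz]; exists x; split => //; by apply/Hsys.
Qed.

End Main.

Section HTP.
Variables (F : finFieldType) (K : fieldType) (iota : {rmorphism F -> K}).
Local Notation q := #|F|.
Local Notation phi := (carlitz_ext iota).

Lemma Hcm2 d : enc_sum enc_Ltau (cm2 d) =
  if enc_sum enc_LT d == npair 0 2 then npair 0 3 else enc_sum enc_LT d.
Proof.
case: d => [[]|n] //=.
case: eqP => // /npair_inj [] //.
Qed.

Lemma tcoef_tmap (P : nat -> Prop) t : tcoef_ok P t -> tcoef_ok P (tmap cm2 t).
Proof. elim: t => [n|[c|n]|s IHs u IHu|s IHs u IHu] //= [/IHs ? /IHu ?] //. Qed.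

Lemma coef_full (P : nat -> Prop) sys M : coef_ok P sys -> coef_ok P (fullsys cm2 (inl ctTau) sys M).
Proof.
move=> H; elim: M => [|M IH] /=.
  elim: sys H => [|e s IHs] //= [h1 [h2 h3]]. split; [exact: tcoef_tmap|split; [exact: tcoef_tmap|exact: IHs]].
by split; [|split].
Qed.

Lemma phi_opp a : phi (fun i => - a i) = (fun i => - phi a i).
Proof. apply: functional_extensionality => i. by rewrite /carlitz_ext rmorphN. Qed.

Lemma is_dioph_ext C (A : lstruct C) k (S1 S2 : ('I_k -> lcar A) -> Prop) :
  (forall x, S1 x <-> S2 x) -> is_dioph A k S1 -> is_dioph A k S2.
Proof. move=> E [sys H]; exists sys => x. by rewrite -E. Qed.

Lemma htp : HTP_negative enc_LT (psT F) -> HTP_negative enc_Ltau (tps K q).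
Proof.
case=> dom [nu [rn hc hsc nodec]].
exists dom, (fun n => phi (nu n)).
have Hc2 : forall d, coef_interp (A:=tps K q) (fun n => phi (nu n)) (cm2 d) = phi (coef_interp (A:=psT F) nu d).
  by case=> [c|n] //=; exact: Hc1.
have Ht2 : coef_interp (A:=tps K q) (fun n => phi (nu n)) (inl ctTau) = tauS K by [].
split.
- case: rn => [rp [inj [[z [dz Ez]] [[o [don Eo]] [[ca Ha] [[cmu Hm] [co Ho]]]]]]].
  split => //; split; first by move=> n m dn dm /phi_inj /inj; apply.
  split; first by exists z; split => //; rewrite Ez -(Hc1 iota cT0).
  split; first by exists o; split => //; rewrite Eo -(Hc1 iota cT1).
  split.
    exists ca => n m dn dm. have [r [e dr E]] := Ha n m dn dm.
    by exists r; split => //; rewrite E /= phi_add.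
  split.
    exists cmu => n m dn dm. have [r [e dr E]] := Hm n m dn dm.
    by exists r; split => //; rewrite E /= phi_mul.
  exists co => n dn. have [r [e dr E]] := Ho n dn.
  by exists r; split => //; rewrite E /= phi_opp.
- case.
  + have [n [dn E]] := hc cT0. exists n; split => //. by rewrite E -(Hc1 iota cT0).
  + have [n [dn E]] := hc cT1. exists n; split => //. by rewrite E -(Hc1 iota cT1).
  + have [n [dn E]] := hc cT0. exists n; split => //. rewrite E -(Hc1 iota cT0) /=.
    apply: functional_extensionality => i. by rewrite /tw_scalar /iota0_T; case: (i == 0%N).
  + have [n [dn E]] := hc cTT. exists n; split => //. by rewrite E -(Hc1 iota cTT).
- move=> n dn. have := dioph iota (hsc n dn).
  apply: is_dioph_ext => z; split.
  + by case=> x [Ex Hz]; rewrite Hz Ex.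
  + move=> Hz; exists (fun _ => nu n); split => // j. by rewrite (ord1 j).
- case=> c' Hc'. apply: nodec.
  exists (RComp c' Prog2) => sys Hok.
  set M := (enc_sys (enc_sum enc_LT) sys).+1.
  set sys2 := fullsys cm2 (inl ctTau) sys M.
  have Hok2 : coef_ok dom sys2 by exact: coef_full.
  have Henc : prim (trS (npair 0 2) (npair 0 3)) (cons_step (npair 0 3)) M (enc_sys (enc_sum enc_LT) sys)
              = enc_sys (enc_sum enc_Ltau) sys2.
    exact: (@enc_full _ _ _ _ _ (inl ctTau) _ _ Hcm2 (erefl _)).
  have Hev := eval_prog2 (enc_sys (enc_sum enc_LT) sys). rewrite -/M Henc in Hev.
  have Heq : solvable (psT F) nu sys <-> solvable (tps K q) (fun n => phi (nu n)) sys2.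
    split.
    * case=> v Hv. exists (fun i => phi (v i)). exact: (full_fwd Hc2 Ht2 M Hv).
    * case=> w Hw. have [v [_ Hv]] := full_bwd Hc2 Ht2 (svb_enc _ sys) Hw. by exists v.
  have [H0 H1] := Hc' sys2 Hok2.
  split.
  + move=> /Heq /H0 e. exact: eComp Hev e.
  + move=> ns. have e := H1 (fun s => ns (proj2 Heq s)). exact: eComp Hev e.
Qed.
End HTP.

Theorem mainTheorem5 (F : finFieldType) (K : fieldType)
  (iota : {rmorphism F -> K}) :
  (dioph_map (psT F) (tps K #|F|) (carlitz_ext iota) /\
   effective_dioph_map enc_LT enc_Ltau (psT F) (tps K #|F|) (carlitz_ext iota)) /\
  (HTP_negative enc_LT (psT F) -> HTP_negative enc_Ltau (tps K #|F|)).
Proof. split; [split; [exact: dioph | exact: effective] | exact: htp]. Qed.
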